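(* Let $(X,p_X)$ be a partial metric space and ${}^*X$ a nonstandard extension of $X$ with extended function ${}^*p_X$. For $x,y\in{}^*X$ write $x\approx^p_X y$ if ${}^*p_X(x,x)\approx{}^*p_X(x,y)\approx{}^*p_X(y,y)$ (where $a\approx b$ means $a-b$ is infinitesimal). Then $\approx^p_X$ is an equivalence relation on ${}^*X$.
   Context: A partial metric on a set $X$ is a function $p_X\colon X\times X\to\mathbb{R}_{\geq0}$ such that for all $x,y,z\in X$: (P1) $p_X(x,x)=p_X(x,y)=p_X(y,y)$ implies $x=y$; (P2) $p_X(x,x)\leq p_X(x,y)$; (P3) $p_X(x,y)=p_X(y,x)$; (P4) $p_X(x,z)+p_X(y,y)\leq p_X(x,y)+p_X(y,z)$. Nonstandard analysis: ${}^*X$, ${}^*\mathbb{R}$ denote nonstandard extensions (satisfying transfer), ${}^*p_X\colon{}^*X\times{}^*X\to{}^*\mathbb{R}_{\geq0}$ the extension of $p_X$. *)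

(* Defs.v *)
From HB Require Import structures.
From mathcomp Require Import all_boot all_order all_algebra.
From mathcomp Require Import reals.
Set Implicit Arguments. Unset Strict Implicit. Unset Printing Implicit Defensive.
Import Order.TTheory GRing.Theory Num.Theory.
Local Open Scope ring_scope.

(* Axioms (P0: nonnegativity, P1-P4) of a partial metric, over any ordered
   codomain F.  Used both for the standard p_X (F = R, the reals) and for the
   transferred statement about *p_X (F = *R). *)
Definition partial_metric (F : numDomainType) (X : Type) (p : X -> X -> F) : Prop :=
  [/\ (forall x y, 0 <= p x y),
      (forall x y, p x x = p x y -> p x y = p y y -> x = y),
      (forall x y, p x x <= p x y),
      (forall x y, p x y = p y x)
    & (forall x y z, p x z + p y y <= p x y + p y z)].

(* Nonstandard extension *R of R: an ordered field extension, given by an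
   order-embedding ring morphism iota : R -> *R.  a in *R is infinitesimal
   when |a| < iota r for every standard r > 0. *)
Definition infinitesimal (R : realType) (sR : realFieldType)
  (iota : R -> sR) (a : sR) : Prop :=
  forall r : R, 0 < r -> `|a| < iota r.

Definition infclose (R : realType) (sR : realFieldType)
  (iota : R -> sR) (a b : sR) : Prop := infinitesimal iota (a - b).

Definition papprox (R : realType) (sR : realFieldType) (iota : R -> sR)
  (sX : Type) (sp : sX -> sX -> sR) (x y : sX) : Prop :=
  infclose iota (sp x x) (sp x y) /\ infclose iota (sp x y) (sp y y).

Definition is_equivalence (T : Type) (r : T -> T -> Prop) : Prop :=
  [/\ (forall x, r x x),
      (forall x y, r x y -> r y x)
    & (forall x y z, r x y -> r y z -> r x z)].

(* Main.v *)
Require Import Defs.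
From HB Require Import structures.
From mathcomp Require Import all_boot all_order all_algebra.
From mathcomp Require Import reals.
From mathcomp Require Import ring.
Import Order.TTheory GRing.Theory Num.Theory.
Local Open Scope ring_scope.

Theorem claim2p6
  (R : realType) (X : Type) (p : X -> X -> R) (hp : partial_metric p)
  (* the nonstandard extension *R of R *)
  (sR : realFieldType) (iota : {rmorphism R -> sR})
  (iota_mono : forall a b : R, (iota a <= iota b) = (a <= b))
  (* the nonstandard extension *X of X and the extended function *p_X *)
  (sX : Type) (iotaX : X -> sX) (sp : sX -> sX -> sR)
  (sp_ext : forall x y : X, sp (iotaX x) (iotaX y) = iota (p x y))
  (* transfer of the partial-metric axioms to *p_X *)
  (sp_transfer : partial_metric sp) :
  is_equivalence (papprox iota sp).
Proof.
have ilt : forall a b : R, (iota a < iota b) = (a < b).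
  by move=> a b; rewrite !ltNge iota_mono.
have inf0 : infinitesimal iota 0.
  by move=> r r0; rewrite normr0 -(rmorph0 iota) ilt.
have infN : forall a, infinitesimal iota a -> infinitesimal iota (- a).
  by move=> a Ha r r0; rewrite normrN; apply: Ha.
have infD : forall a b, infinitesimal iota a -> infinitesimal iota b ->
    infinitesimal iota (a + b).
  move=> a b Ha Hb r r0.
  have r2 : 0 < r / 2 by rewrite divr_gt0.
  apply: (le_lt_trans (ler_normD a b)).
  have -> : r = r / 2 + r / 2 by rewrite -splitr.
  by rewrite rmorphD ltrD ?Ha ?Hb.
have infle : forall a b, 0 <= a -> a <= b -> infinitesimal iota b ->
    infinitesimal iota a.
  move=> a b a0 ab Hb r r0; apply: le_lt_trans (Hb r r0).
  by rewrite !ger0_norm // (le_trans a0 ab).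
case: sp_transfer => sp0 _ sp2 sp3 sp4.
rewrite /infclose in infN infD infle *.
split.
- by move=> x; split; rewrite /infclose subrr.
- move=> x y [H1 H2]; split; rewrite /infclose (sp3 y x).
  + by have := infN _ H2; rewrite opprB.
  + by have := infN _ H1; rewrite opprB.
- move=> x y z [H1 H2] [H3 H4]; rewrite /infclose in H1 H2 H3 H4.
  have HBA := infN _ H1; rewrite opprB in HBA.
  have HDC := infN _ H3; rewrite opprB in HDC.
  have H5 : infinitesimal iota (sp x z - sp x x).
    apply: (infle _ _ _ _ (infD _ _ HBA HDC)).
      by rewrite subr_ge0 sp2.
    have := sp4 x y z.
    rewrite -[_ <= _]subr_ge0 => h.
    rewrite -subr_ge0; apply: (le_trans h); rewrite le_eqVlt; apply/orP; left.
    by apply/eqP; ring.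
  split.
  + by have := infN _ H5; rewrite opprB.
  + apply: (infle _ _ _ _ (infD _ _ H2 H4)).
      by rewrite subr_ge0 (sp3 x z) sp2.
    have := sp4 x y z.
    rewrite -[_ <= _]subr_ge0 => h.
    rewrite -subr_ge0; apply: (le_trans h); rewrite le_eqVlt; apply/orP; left.
    by apply/eqP; ring.
Qed.
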